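(* Let $X$ be a shift space which is eventually dendric with threshold $m$. Then $\rho_X(U)$ is finite for every suffix code $U\subseteq\mathcal L(X)$. Moreover, if $U$ is a finite $X$-maximal suffix code with $U\subseteq\mathcal L_{\ge m}(X)$, then $\rho_X(U)=\rho_X(\mathcal L_m(X))$.
   Context: $A$ is a finite alphabet; a shift space is a closed shift-invariant subset $X\subseteq A^{\mathbb Z}$; $\mathcal L(X)$ is its set of finite factors (including the empty word), $\mathcal L_n(X)=\mathcal L(X)\cap A^n$, $\mathcal L_{\ge n}(X)=\bigcup_{k\ge n}\mathcal L_k(X)$. For $w\in\mathcal L(X)$, the extension graph $\mathcal E_1(w)$ is the undirected bipartite graph with vertex set the disjoint union of $\{a\in A: aw\in\mathcal L(X)\}$ and $R_1(w)=\{b\in A: wb\in\mathcal L(X)\}$, with an edge $(a,b)$ iff $awb\in\mathcal L(X)$; $X$ is eventually dendric with threshold $m$ if $\mathcal E_1(w)$ is a tree for every $w\in\mathcal L_{\ge m}(X)$. Set $\rho_X(w)=\mathrm{Card}\,R_1(w)-1$ and $\rho_X(W)=\sum_{w\in W}\rho_X(w)$ for $W\subseteq\mathcal L(X)$. A suffix code is a set of words none of which is a proper suffix of another; a suffix code $U\subseteq\mathcal L(X)$ is $X$-maximal if it is not properly contained in a suffix code $V\subseteq\mathcal L(X)$. *)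

(* Defs.v *)
From Stdlib Require Import ClassicalDescription.
From HB Require Import structures.
From mathcomp Require Import all_boot all_order all_algebra.
Set Implicit Arguments. Unset Strict Implicit. Unset Printing Implicit Defensive.
Import Order.TTheory GRing.Theory Num.Theory.

Section Shifts.
Variable A : finType.

Definition config := int -> A.

Definition shift (x : config) : config := fun i => x (i + 1)%R.

(* X closed in the product (Cantor) topology of A^Z, A discrete *)
Definition closed_set (X : config -> Prop) : Prop :=
  forall x : config,
    (forall n : nat, exists y, X y /\
       forall i : int, (- (n%:Z) <= i)%R -> (i <= n%:Z)%R -> y i = x i) ->
    X x.

Definition shift_invariant (X : config -> Prop) : Prop :=
  forall x, X x <-> X (shift x).

Definition shift_space (X : config -> Prop) : Prop :=
  closed_set X /\ shift_invariant X.

Definition factor_at (x : config) (i : int) (n : nat) : seq A :=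
  [seq x (i + k%:Z)%R | k <- iota 0 n].

(* language L(X), including the empty word *)
Definition inL (X : config -> Prop) (w : seq A) : Prop :=
  exists x, X x /\ exists i : int, w = factor_at x i (size w).

Definition inLb (X : config -> Prop) (w : seq A) : bool :=
  if excluded_middle_informative (inL X w) then true else false.

Definition R1 (X : config -> Prop) (w : seq A) : {set A} :=
  [set b | inLb X (rcons w b)].

Definition rho (X : config -> Prop) (w : seq A) : nat := #|R1 X w| - 1.

(* Extension graph E_1(w): vertices inl a (left, a w in L) and inr b
   (right, w b in L); undirected edge {inl a, inr b} iff a w b in L. *)
Definition ext_vertices (X : config -> Prop) (w : seq A) : pred (A + A) :=
  fun v => match v with
           | inl a => inLb X (a :: w)
           | inr b => inLb X (rcons w b)
           end.

Definition ext_edge (X : config -> Prop) (w : seq A) : rel (A + A) :=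
  fun u v => match u, v with
             | inl a, inr b => inLb X (a :: rcons w b)
             | inr b, inl a => inLb X (a :: rcons w b)
             | _, _ => false
             end.

(* A (simple, undirected) graph with vertex set V and symmetric edge relation
   e is a tree: connected and acyclic (no cycle through >= 3 distinct vertices). *)
Definition is_tree (T : finType) (V : pred T) (e : rel T) : Prop :=
  (forall u v, u \in V -> v \in V -> connect e u v) /\
  (forall c : seq T, all (mem V) c -> uniq c -> 3 <= size c -> ~~ cycle e c).

Definition eventually_dendric (X : config -> Prop) (m : nat) : Prop :=
  forall w : seq A, m <= size w -> inL X w ->
    is_tree (ext_vertices X w) (ext_edge X w).

Definition suffix_code (U : seq A -> Prop) : Prop :=
  forall u v, U u -> U v -> suffix u v -> u = v.

Definition X_maximal_suffix_code (X : config -> Prop) (U : seq A -> Prop) : Prop :=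
  suffix_code U /\ (forall u, U u -> inL X u) /\
  (forall V : seq A -> Prop, suffix_code V -> (forall v, V v -> inL X v) ->
     (forall u, U u -> V u) -> forall v, V v -> U v).

(* rho_X(U) is finite (for U of arbitrary cardinality): the finite partial
   sums of the nonnegative terms rho_X(u), u in U, are bounded. *)
Definition rho_finite (X : config -> Prop) (U : seq A -> Prop) : Prop :=
  exists N : nat, forall s : seq (seq A), uniq s -> (forall u, u \in s -> U u) ->
    \sum_(u <- s) rho X u <= N.

End Shifts.

(* Main.v *)
Require Import Defs.
From Stdlib Require Import ClassicalDescription.
From mathcomp Require Import all_boot all_order all_algebra.
From mathcomp Require Import zify ring.
Set Implicit Arguments. Unset Strict Implicit. Unset Printing Implicit Defensive.
Import GRing.Theory.
From mathcomp Require Import zify ring.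
Section Graph.
Variable T : finType.

Definition Dcard (e : rel T) := #|[set p : T * T | e p.1 p.2]|.

Definition acyclic (V : pred T) (e : rel T) :=
  forall c : seq T, all (mem V) c -> uniq c -> 3 <= size c -> ~~ cycle e c.

Lemma path_in_V (V : pred T) (e : rel T) :
  (forall u v, e u v -> v \in V) ->
  forall x t, x \in V -> path e x t -> all (mem V) (x :: t).
Proof.
move=> eV x t; elim: t x => [|y t IH] x xV /=; first by rewrite xV.
case/andP=> exy pt; rewrite xV /=; exact: (IH y (eV _ _ exy) pt).
Qed.

Lemma leaf_exists (V : pred T) (e : rel T) x0 :
  symmetric e -> irreflexive e -> (forall u v, e u v -> v \in V) ->
  acyclic V e -> x0 \in V ->
  exists2 y, y \in V & forall z1 z2, e y z1 -> e y z2 -> z1 = z2.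
Proof.
move=> esym eirr eV acyc x0V.
pose P n := [exists x, exists t : n.-tuple T,
               [&& x \in V, path e x t & uniq (x :: t)]].
have P0 : exists n, P n by exists 0; apply/existsP; exists x0; apply/existsP;
  exists [tuple]; rewrite x0V.
have Pb : forall n, P n -> n <= #|T|.
  move=> n /existsP [x /existsP [t /and3P [_ _ u]]].
  have E := card_uniqP u; rewrite /= size_tuple in E.
  have := max_card (mem (x :: (t : seq T))); rewrite E; lia.
case: (ex_maxnP P0 Pb) => n /existsP [x /existsP [t /and3P [xV pt ut]]] maxn.
pose c := x :: (t : seq T).
pose y := last x t.
have cV := path_in_V eV xV pt.
have yV : y \in V by have := mem_last x t; move/(allP cV).
exists y => // z1 z2.
have inc : forall z, e y z -> z \in c.
  move=> z eyz; apply/negPn/negP => zc.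
  have : P n.+1.
    apply/existsP; exists x; apply/existsP.
    have st : size (rcons t z) == n.+1 by rewrite size_rcons size_tuple.
    exists (Tuple st); rewrite /= xV rcons_path pt eyz /=.
    have u' : uniq (rcons c z) by rewrite rcons_uniq zc ut.
    exact: u'.
  by move/maxn; rewrite ltnn.
have key : forall z1 z2, e y z1 -> e y z2 -> index z1 c < index z2 c -> False.
  move=> a b ea eb lt.
  have ac := inc _ ea; have bc := inc _ eb.
  have szc : size c = (size t).+1 by [].
  have bsz : index b c < size t.
    have : index b c < size c by rewrite index_mem.
    rewrite szc ltnS leq_eqVlt => /orP [/eqP E|] //.
    have : b = y.
      by rewrite -(nth_index x bc) E /y (last_nth x).
    by move=> bE; move: eb; rewrite bE eirr.
  set i := index a c.
  have := acyc (drop i c).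
  have dE : drop i c = a :: drop i.+1 c.
    by rewrite (drop_nth x) ?nth_index // index_mem.
  rewrite (drop_uniq) ?ut // size_drop szc.
  have -> : all (mem V) (drop i c) by apply/allP => v /mem_drop vin; apply: (allP cV).
  have -> : 3 <= (size t).+1 - i by lia.
  move=> /(_ isT isT isT); apply/negP/negPn.
  rewrite dE /= rcons_path.
  have pc : path e x t := pt.
  have : sorted e c by [].
  move/(drop_sorted i); rewrite dE /= => -> /=.
  have -> : last a (drop i.+1 c) = y.
    have : last x c = y by [].
    by rewrite -{1}(cat_take_drop i c) last_cat dE /= => <-.
  exact: ea.
move=> e1 e2; case: (eqVneq z1 z2) => // ne.
have i1 := inc _ e1; have i2 := inc _ e2.
have : index z1 c != index z2 c.
  by apply: contra ne => /eqP E; rewrite -(nth_index x i1) E nth_index.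
rewrite neq_ltn => /orP [lt|lt].
  by case: (key _ _ e1 e2 lt).
by case: (key _ _ e2 e1 lt).
Qed.

Lemma acyc_ub n : forall (V : pred T) (e : rel T), #|V| <= n ->
  symmetric e -> irreflexive e -> (forall u v, e u v -> v \in V) ->
  acyclic V e -> Dcard e <= 2 * (#|V| - 1).
Proof.
elim: n => [|n IH] V e Vn esym eirr eV acyc.
  have V0 : #|V| = 0 by lia.
  have -> : Dcard e = 0.
    apply/eqP; rewrite cards_eq0; apply/eqP/setP => p; rewrite !inE.
    apply/negbTE/negP => /eV; by rewrite (card0_eq V0).
  by [].
case: (pickP V) => [x0 x0V | V0].
  have [y yV leaf] := leaf_exists esym eirr eV acyc x0V.
  pose V' := [predD1 V & y].
  pose e' := [rel u v | [&& e u v, u != y & v != y]].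
  have cV : #|V| = #|V'| + 1 by rewrite (cardD1 y V) yV addnC.
  have IH' : Dcard e' <= 2 * (#|V'| - 1).
    apply: IH.
    - by move: Vn; rewrite cV addn1 ltnS.
    - move=> u v /=; rewrite esym; by case: (u != y); case: (v != y); rewrite ?andbF.
    - by move=> u /=; rewrite eirr.
    - by move=> u v /= /and3P [euv _ vy]; rewrite !inE vy (eV _ _ euv).
    - move=> c cV' uc sc; apply: contraNN (acyc c _ uc sc).
        by apply: sub_cycle => u v /= /and3P [].
      by apply/allP => v /(allP cV'); rewrite !inE => /andP [].
  case: (pickP (e y)) => [z eyz | noN].
    have zV' : 0 < #|V'|.
      apply/card_gt0P; exists z; rewrite !inE (eV _ _ eyz) andbT.
      by apply: contraTneq eyz => ->; rewrite eirr.
    have sub : [set p : T * T | e p.1 p.2] \subset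
               [set p : T * T | e' p.1 p.2] :|: [set (y, z); (z, y)].
      apply/subsetP => [[u v]]; rewrite !inE /= => euv.
      case: (eqVneq u y) => [uy | uy].
        by subst u; rewrite (leaf _ _ euv eyz) eqxx !orbT.
      case: (eqVneq v y) => [vy | vy].
        subst v; rewrite esym in euv; by rewrite (leaf _ _ euv eyz) eqxx !orbT.
      by apply/orP; left; apply/and3P.
    have := subset_leq_card sub; rewrite cardsU cards2 /Dcard => h.
    have c2 : ((y, z) != (z, y)).+1 <= 2 by case: (_ != _).
    rewrite /Dcard in IH' *; move: h c2 IH' zV' cV.
    set a := #|[set p | e p.1 p.2]|; set b := #|[set p | e' p.1 p.2]|.
    set c := #|_ :&: _|; set d := ((y, z) != (z, y)).+1.
    set f := #|V'|; set g := #|V|; lia.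
  have eq : [set p : T * T | e p.1 p.2] = [set p : T * T | e' p.1 p.2].
    apply/setP => [[u v]]; rewrite !inE /=.
    case euv: (e u v) => //=.
    case: (eqVneq u y) => [uy | uy]; first by subst u; rewrite noN in euv.
    case: (eqVneq v y) => [vy | vy] //; subst v; by rewrite esym noN in euv.
  rewrite /Dcard eq; rewrite /Dcard in IH'; move: IH' cV.
  set b := #|[set p | e' p.1 p.2]|; set f := #|V'|; set g := #|V|; lia.
have -> : Dcard e = 0.
  apply/eqP; rewrite cards_eq0; apply/eqP/setP => p; rewrite !inE.
  apply/negbTE/negP => /eV; by rewrite unfold_in V0.
by [].
Qed.

Section Conn.
Variables (V : pred T) (e : rel T) (v0 : T).
Hypothesis esym : symmetric e.
Hypothesis v0V : v0 \in V.
Hypothesis conn : forall u v, u \in V -> v \in V -> connect e u v.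

Definition Pd v n := [exists p : n.-tuple T, path e v0 p && (last v0 p == v)]
                     || ~~ connect e v0 v.

Lemma exPd v : exists n, Pd v n.
Proof.
case ce: (connect e v0 v); last by exists 0; rewrite /Pd ce orbT.
case/connectP: ce => p pp vE; exists (size p); apply/orP; left.
by apply/existsP; exists (in_tuple p); rewrite /= pp vE eqxx.
Qed.

Definition dist v := ex_minn (exPd v).

Lemma distP v : Pd v (dist v).
Proof. by rewrite /dist; case: ex_minnP. Qed.

Lemma dist_min v n : Pd v n -> dist v <= n.
Proof. by rewrite /dist; case: ex_minnP => m _ H /H. Qed.

Lemma par_ex v : v \in V -> v != v0 -> exists u, e u v && (dist u < dist v).
Proof.
move=> vV vv0; have := distP v; rewrite /Pd conn //= orbF.
case/existsP=> p /andP [pp /eqP lp].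
move: (size_tuple p) pp lp; move: (p : seq T) => {}p <-.
case/lastP: p => [|q z].
  by move=> _ /= E; move: vv0; rewrite E eqxx.
rewrite rcons_path last_rcons size_rcons => /andP [pq ez] zv; subst z.
exists (last v0 q); rewrite ez /=; apply: (@leq_trans (size q).+1) => //.
rewrite ltnS; apply: dist_min; apply/orP; left; apply/existsP.
by exists (in_tuple q); rewrite /= pq eqxx.
Qed.

Definition par v := odflt v0 [pick u | e u v && (dist u < dist v)].

Lemma parP v : v \in V -> v != v0 -> e (par v) v && (dist (par v) < dist v).
Proof.
move=> vV vv0; rewrite /par; case: pickP => [u //|N].
by case: (par_ex vV vv0) => u; rewrite N.
Qed.

Lemma conn_lb : 2 * (#|V| - 1) <= Dcard e.
Proof.
pose S := setX [set v | (v \in V) && (v != v0)] [set: bool].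
pose f (p : T * bool) := if p.2 then (p.1, par p.1) else (par p.1, p.1).
have cS : #|S| = 2 * (#|V| - 1).
  rewrite cardsX cardsT card_bool (cardD1 v0 V) v0V add1n subn1 /= mulnC.
  by congr (_ * _); apply: eq_card => v; rewrite !inE andbC.
have inj : {in S &, injective f}.
  move=> [u b] [u' b']; rewrite !inE /= andbT andbT => /andP [uV uv0] /andP [u'V u'v0].
  have := parP uV uv0; have := parP u'V u'v0.
  case/andP=> _ d' /andP [_ d].
  case: b; case: b'; rewrite /f /=.
  - by case=> ->.
  - case=> E1 E2; move: d d'; rewrite E2 -E1 => h1 h2.
    by have := ltn_trans h1 h2; rewrite ltnn.
  - case=> E1 E2; move: d d'; rewrite E1 -E2 => h1 h2.
    by have := ltn_trans h1 h2; rewrite ltnn.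
  - by case=> _ ->.
have sub : f @: S \subset [set p : T * T | e p.1 p.2].
  apply/subsetP => q /imsetP [[u b]]; rewrite !inE /= andbT => /andP [uV uv0] ->.
  have /andP [eu _] := parP uV uv0.
  by case: b; rewrite /f /= ?inE //= esym.
rewrite -cS -(card_in_imset inj); exact: subset_leq_card.
Qed.
End Conn.

End Graph.
Section Lang.
Variable A : finType.
Variable X : config A -> Prop.

Lemma inLbP w : reflect (inL X w) (inLb X w).
Proof. rewrite /inLb; case: excluded_middle_informative => H; by constructor. Qed.

Lemma factor_atD (x : config A) i n1 n2 :
  factor_at x i (n1 + n2) = factor_at x i n1 ++ factor_at x (i + n1%:Z)%R n2.
Proof.
rewrite /factor_at iotaD map_cat add0n; congr (_ ++ _).
rewrite -[n1 in iota n1 _]addn0 iotaDl -map_comp; apply: eq_map => k /=.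
by rewrite PoszD GRing.addrA.
Qed.

Lemma size_factor_at (x : config A) i n : size (factor_at x i n) = n.
Proof. by rewrite size_map size_iota. Qed.

Lemma inL_infix u v t : inL X (u ++ v ++ t) -> inL X v.
Proof.
case=> x [Xx [i E]]; exists x; split => //; exists (i + (size u)%:Z)%R.
move: E; rewrite !size_cat factor_atD factor_atD.
move/eqP; rewrite eqseq_cat ?size_factor_at // => /andP [_].
by rewrite eqseq_cat ?size_factor_at // => /andP [/eqP <- _].
Qed.

Lemma inL_suffix u v : suffix u v -> inL X v -> inL X u.
Proof. by case/suffixP => t -> H; apply: (@inL_infix t u [::]); rewrite cats0. Qed.

Lemma inL_rcons w b : inL X (rcons w b) -> inL X w.
Proof. by rewrite -cats1 => H; apply: (@inL_infix [::] w [:: b]). Qed.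

Lemma inL_cons a w : inL X (a :: w) -> inL X w.
Proof. by move=> H; apply: (@inL_infix [:: a] w [::]); rewrite cats0. Qed.

Lemma inL_right w : inL X w -> exists b, inL X (rcons w b).
Proof.
case=> x [Xx [i E]]; exists (x (i + (size w)%:Z)%R); exists x; split => //.
exists i; rewrite size_rcons -addn1 factor_atD -E -cats1; congr (_ ++ _).
by rewrite /factor_at /= GRing.addr0.
Qed.

Lemma factor_at_pred (x : config A) i n :
  factor_at x (i - 1)%R n.+1 = x (i - 1)%R :: factor_at x i n.
Proof.
rewrite /factor_at /= GRing.addr0; congr (_ :: _).
have -> : iota 1 n = map (addn 1) (iota 0 n) by rewrite -iotaDl.
rewrite -map_comp; apply: eq_map => k /=.
congr (x _); rewrite -addn1 PoszD; ring.
Qed.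

Lemma inL_left w : inL X w -> exists a, inL X (a :: w).
Proof.
case=> x [Xx [i E]]; exists (x (i - 1)%R); exists x; split => //.
by exists (i - 1)%R; rewrite /= factor_at_pred -E.
Qed.


Lemma inLb_inL w : inLb X w -> inL X w.
Proof. by move/inLbP. Qed.

Lemma R1_gt0 w : inL X w -> 0 < #|R1 X w|.
Proof.
case/inL_right => b bL; apply/card_gt0P; exists b; rewrite inE; exact/inLbP.
Qed.

Lemma R1_eq0 w : ~ inL X w -> #|R1 X w| = 0.
Proof.
move=> nL; apply/eqP; rewrite cards_eq0; apply/eqP/setP => b; rewrite !inE.
by apply/negbTE/negP => /inLbP /inL_rcons.
Qed.

Section KeyW.
Variable w : seq A.
Let e := ext_edge X w.
Let V := ext_vertices X w.
Let Lw := [set a | inLb X (a :: w)].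
Let N := [set p : A * A | inLb X (p.1 :: rcons w p.2)].

Lemma e_sym : symmetric e.
Proof. by case=> a; case=> b. Qed.

Lemma e_irr : irreflexive e.
Proof. by case. Qed.

Lemma eV : forall u v, e u v -> v \in V.
Proof.
case=> a; case=> b //= /inLbP H; rewrite unfold_in /=; apply/inLbP.
  by apply: (@inL_infix [:: a] (rcons w b) [::]); rewrite cats0.
by move: H; rewrite -cats1 => H; apply: (@inL_infix [::] (b :: w) [:: a]).
Qed.

Lemma Dcard_N : Dcard e = 2 * #|N|.
Proof.
pose f1 (p : A * A) := (@inl A A p.1, @inr A A p.2).
pose f2 (p : A * A) := (@inr A A p.2, @inl A A p.1).
have i1 : injective f1 by move=> [a b] [c d] [-> ->].
have i2 : injective f2 by move=> [a b] [c d] [-> ->].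
have nf2 : forall a b, ((@inl A A a, @inr A A b) \in f2 @: N) = false.
  by move=> a b; apply/negbTE/negP => /imsetP [[c d] _ []].
have nf1 : forall a b, ((@inr A A a, @inl A A b) \in f1 @: N) = false.
  by move=> a b; apply/negbTE/negP => /imsetP [[c d] _ []].
have nf3 : forall a b, ((@inl A A a, @inl A A b) \in f1 @: N :|: f2 @: N) = false.
  by move=> a b; apply/negbTE/negP; rewrite inE => /orP [] /imsetP [[c d] _ []].
have nf4 : forall a b, ((@inr A A a, @inr A A b) \in f1 @: N :|: f2 @: N) = false.
  by move=> a b; apply/negbTE/negP; rewrite inE => /orP [] /imsetP [[c d] _ []].
rewrite /Dcard.
have -> : [set p | e p.1 p.2] = f1 @: N :|: f2 @: N.
  apply/setP => [[u v]]; case: u => a; case: v => b.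
  - by rewrite nf3 inE.
  - have -> : (inl a, inr b) = f1 (a, b) by [].
    by rewrite inE [in RHS]inE (mem_imset _ _ i1) nf2 orbF inE.
  - have -> : (inr a, inl b) = f2 (b, a) by [].
    by rewrite inE [in RHS]inE (mem_imset _ _ i2) nf1 inE.
  - by rewrite nf4 inE.
rewrite cardsU !card_imset //.
have -> : #|f1 @: N :&: f2 @: N| = 0.
  apply/eqP; rewrite cards_eq0; apply/eqP/setP => p; rewrite !inE.
  by apply/negbTE/negP => /andP [/imsetP [[a b] _ ->] /imsetP [[c d] _ []]].
by rewrite subn0 addnn -mul2n.
Qed.

Lemma cardV : #|V| = #|Lw| + #|R1 X w|.
Proof.
rewrite -!sum1_card big_sumType /=.
congr (_ + _); apply: eq_bigl => a; rewrite !inE //.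
Qed.

Lemma cardN : #|N| = \sum_(a : A) #|R1 X (a :: w)|.
Proof.
rewrite -sum1_card big_mkcond /=.
rewrite (eq_bigr (fun p : A * A => (fun a b => if (a, b) \in N then 1 else 0) p.1 p.2));
  last by case.
rewrite -(pair_bigA _ (fun a b => if (a, b) \in N then 1 else 0)) /=.
apply: eq_bigr => a _; rewrite -sum1_card big_mkcond /=.
rewrite [RHS]big_mkcond; apply: eq_bigr => b _; by rewrite !inE.
Qed.

End KeyW.

Lemma key_rho w : is_tree (ext_vertices X w) (ext_edge X w) -> inL X w ->
  rho X w = \sum_(a : A) rho X (a :: w).
Proof.
case=> conn acyc wL.
have [a aL] := inL_left wL.
have v0V : inl a \in ext_vertices X w by rewrite unfold_in /=; apply/inLbP.
have lb := conn_lb (@e_sym w) v0V conn.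
have ub := acyc_ub (leqnn _) (@e_sym w) (@e_irr w) (@eV w) acyc.
rewrite Dcard_N cardV in lb ub.
have r1 := R1_gt0 wL.
have l1 : 0 < #|[set a | inLb X (a :: w)]|.
  by apply/card_gt0P; exists a; rewrite inE; apply/inLbP.
have cN := cardN w.
have S : \sum_(b : A) rho X (b :: w) + #|[set a | inLb X (a :: w)]|
         = \sum_(b : A) #|R1 X (b :: w)|.
  rewrite -sum1_card [X in _ + X]big_mkcond -big_split /=; apply: eq_bigr => b _.
  rewrite inE /rho; case: (boolP (inLb X (b :: w))) => h.
    by rewrite subn1 addn1 prednK // R1_gt0 //; apply/inLbP.
  by rewrite R1_eq0 //; apply/inLbP.
move: lb ub r1 l1 cN S; rewrite /rho.
set s1 := \sum_(b : A) _; set s2 := \sum_(b : A) _.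
set x1 := #|[set _ | _]|; set x2 := #|R1 X w|; set x3 := #|[set _ | _]|.
lia.
Qed.

Lemma sum_pred1_seq (s : seq (seq A)) w (F : seq A -> nat) : uniq s ->
  \sum_(u <- s | u == w) F u = (w \in s) * F w.
Proof.
move=> us; case: (boolP (w \in s)) => ws.
  rewrite (big_rem w) // eqxx big_hasC; first by rewrite mul1n; apply: addn0.
  by apply/hasPn => u uin; apply: contraTneq uin => ->; rewrite mem_rem_uniqF.
by rewrite big_hasC //; apply/hasPn => u uin; apply: contraTneq uin => ->.
Qed.

Lemma suffix_a_uniq (w u : seq A) : suffix w u -> u != w ->
  exists a0, forall a, suffix (a :: w) u = (a == a0).
Proof.
case/suffixP => t ->; case/lastP: t => [|t' a0]; first by rewrite eqxx.
move=> _; exists a0 => a.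
rewrite -cats1 -[a :: w]cat1s suffix_catl // eqxx /= cats1.
rewrite -[[:: a]]/(rcons [::] a) suffix_rcons.
by rewrite suffix0s andbT.
Qed.

Lemma suffix_a_none (w u : seq A) a : suffix (a :: w) u -> suffix w u && (u != w).
Proof.
move=> H; have := size_suffix H => /= sz.
rewrite (catl_suffix (s := [:: a]) H) /=; apply: contraTneq sz => ->; by rewrite ltnn.
Qed.

Lemma sum_a_u (w u : seq A) (x : nat) :
  \sum_(a : A) (if suffix (a :: w) u then x else 0) =
  if suffix w u && (u != w) then x else 0.
Proof.
case: (boolP (suffix w u && (u != w))) => [/andP [h1 h2] | h].
  have [a0 Ha] := suffix_a_uniq h1 h2.
  rewrite (bigD1 a0) //= Ha eqxx big1 ?addn0 // => b /negbTE nb.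
  by rewrite Ha nb.
rewrite big1 // => a _; case: ifP => // /suffix_a_none h'; by rewrite h' in h.
Qed.

Lemma decomp_a (s : seq (seq A)) w (F : seq A -> nat) :
  \sum_(u <- s | suffix w u) F u =
  \sum_(u <- s | u == w) F u + \sum_(a : A) \sum_(u <- s | suffix (a :: w) u) F u.
Proof.
rewrite (eq_bigr (fun a => \sum_(u <- s) if suffix (a :: w) u then F u else 0));
  last by move=> a _; rewrite big_mkcond.
rewrite exchange_big /= big_mkcond [X in X + _]big_mkcond -big_split /=.
apply: eq_bigr => u _; rewrite sum_a_u.
case: (eqVneq u w) => [->|neq]; first by rewrite suffix_refl addn0.
by rewrite andbT; case: (suffix w u).
Qed.

Lemma sum_m_u m (u : seq A) (x : nat) :
  \sum_(t : m.-tuple A) (if suffix t u then x else 0) = if m <= size u then x else 0.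
Proof.
case: (leqP m (size u)) => h.
  have st : size (drop (size u - m) u) == m by rewrite size_drop; apply/eqP; lia.
  rewrite (bigD1 (Tuple st)) //=; rewrite suffixE (eqP st) eqxx big1 ?addn0 //.
  move=> t nt; rewrite suffixE size_tuple; case: ifP => // /eqP E.
  have tE : t = Tuple st by apply: val_inj; rewrite /= -E.
  by move: nt; rewrite tE eqxx.
rewrite big1 // => t _; case: ifP => // /size_suffix; rewrite size_tuple => h'.
by move: h; rewrite ltnNge h'.
Qed.

Lemma decomp_m (s : seq (seq A)) m (F : seq A -> nat) :
  \sum_(u <- s | m <= size u) F u =
  \sum_(t : m.-tuple A) \sum_(u <- s | suffix t u) F u.
Proof.
rewrite (eq_bigr (fun t : m.-tuple A => \sum_(u <- s) if suffix t u then F u else 0));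
  last by move=> a _; rewrite big_mkcond.
rewrite exchange_big /= big_mkcond; apply: eq_bigr => u _; by rewrite sum_m_u.
Qed.

Lemma sum_none (s : seq (seq A)) w (F : seq A -> nat) :
  (forall u, u \in s -> suffix w u -> False) ->
  \sum_(u <- s | suffix w u) F u = 0.
Proof.
move=> H; rewrite big_seq_cond big_pred0 // => u.
by apply/negbTE/andP => -[uin suw]; apply: (H u uin suw).
Qed.

Lemma suffix_cons_inv (u w : seq A) a : suffix u (a :: w) -> u = a :: w \/ suffix u w.
Proof.
case/suffixP => [[|b t]] /= E; first by left.
by right; case: E => _ ->; apply: suffix_suffix.
Qed.

Lemma size_bound (s : seq (seq A)) u : uniq s -> u \in s ->
  size u <= \sum_(v <- s) size v.
Proof. by move=> us uin; rewrite (bigD1_seq u) //= leq_addr. Qed.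

Lemma claimC m s : eventually_dendric X m -> uniq s ->
  suffix_code (fun u => u \in s) -> (forall u, u \in s -> inL X u) ->
  forall k w, (forall u, u \in s -> size u < size w + k) -> inL X w -> m <= size w ->
  \sum_(u <- s | suffix w u) rho X u <= rho X w.
Proof.
move=> dend us sc sL; elim=> [|k IH] w bnd wL mw.
  rewrite sum_none // => u uin suw; move: (bnd u uin).
  by rewrite addn0 ltnNge (size_suffix suw).
rewrite decomp_a sum_pred1_seq //.
case: (boolP (w \in s)) => ws.
  rewrite mul1n big1 ?addn0 // => a _; apply: sum_none => u uin.
  move/suffix_a_none => /andP [suw neq].
  by move: neq; rewrite (sc _ _ ws uin suw) eqxx.
rewrite mul0n add0n (key_rho (dend w mw wL) wL); apply: leq_sum => a _.
case: (boolP (inLb X (a :: w))) => /inLbP aL.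
  apply: IH => //=; last by apply: leqW.
  by move=> u uin; have := bnd u uin; rewrite addnS addSn.
rewrite sum_none // => u uin suw; apply: aL; exact: inL_suffix suw (sL u uin).
Qed.

Lemma rho_notL w : ~ inL X w -> rho X w = 0.
Proof. by move=> h; rewrite /rho R1_eq0. Qed.

Lemma claimE m s : eventually_dendric X m -> uniq s ->
  X_maximal_suffix_code X (fun u => u \in s) ->
  forall k w, (forall u, u \in s -> size u < size w + k) -> inL X w -> m <= size w ->
  (forall u, u \in s -> suffix u w -> u = w) ->
  \sum_(u <- s | suffix w u) rho X u = rho X w.
Proof.
move=> dend us [sc [sL smax]]; elim=> [|k IH] w bnd wL mw H.
  exfalso.
  have : w \in s.
    apply: (smax (fun v => v \in s \/ v = w)); last by right.
    - move=> u v [uin|->] [vin|->] suv //.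
      + exact: sc.
      + exact: H.
      + by move: (bnd v vin); rewrite addn0 ltnNge (size_suffix suv).
    - by move=> v [/sL|->].
    - by move=> u uin; left.
  by move=> win; move: (bnd w win); rewrite addn0 ltnn.
rewrite decomp_a sum_pred1_seq //.
case: (boolP (w \in s)) => ws.
  rewrite mul1n big1 ?addn0 // => a _; apply: sum_none => u uin.
  move/suffix_a_none => /andP [suw neq].
  by move: neq; rewrite (sc _ _ ws uin suw) eqxx.
rewrite mul0n add0n (key_rho (dend w mw wL) wL); apply: eq_bigr => a _.
case: (boolP (inLb X (a :: w))) => /inLbP aL.
  apply: IH => //=.
  - by move=> u uin; have := bnd u uin; rewrite addnS addSn.
  - by apply: leqW.
  - move=> u uin /suffix_cons_inv [//|suw].
    by move: ws; rewrite -(H u uin suw) uin.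
rewrite rho_notL // sum_none // => u uin suw; apply: aL; exact: inL_suffix suw (sL u uin).
Qed.
End Lang.

Lemma suffix_cat_short (A : finType) (x u v : seq A) :
  suffix u (x ++ v) -> size u <= size v -> suffix u v.
Proof.
move=> H le; move: H; rewrite !suffixE size_cat drop_cat -addnBA //.
by rewrite ltnNge leq_addr /= addKn.
Qed.

Theorem mainTheorem11 (A : finType) (X : config A -> Prop) (m : nat) :
  shift_space X -> eventually_dendric X m ->
  (forall U : seq A -> Prop, suffix_code U -> (forall u, U u -> inL X u) ->
     rho_finite X U) /\
  (forall s : seq (seq A), uniq s ->
     X_maximal_suffix_code X (fun u => u \in s) ->
     (forall u, u \in s -> m <= size u) ->
     \sum_(u <- s) rho X u = \sum_(w : m.-tuple A | inLb X w) rho X w).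
Proof.
move=> _ dend; split.
- move=> U sc UL.
  exists (#|A| * #|{: m.-tuple A}| + \sum_(t : m.-tuple A) rho X t).
  move=> s us sU.
  have scs : suffix_code (fun u => u \in s).
    by move=> u v /sU uU /sU vU; exact: sc.
  have sL : forall u, u \in s -> inL X u by move=> u /sU /UL.
  rewrite (bigID (fun u => m <= size u)) /= addnC; apply: leq_add.
  + apply: (@leq_trans (\sum_(u <- s | ~~ (m <= size u)) #|A|)).
      apply: leq_sum => u _; rewrite /rho; exact: leq_trans (leq_subr _ _) (max_card _).
    rewrite big_const_seq iter_addn_0 leq_mul2l.
    case: (pickP (fun _ : A => true)) => [a0 _ | noA]; last first.
      by apply/orP; left; apply/eqP/eq_card0 => a; have := noA a.
    apply/orP; right.
    pose pad (u : seq A) := nseq (m - size u) a0 ++ u.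
    rewrite -size_filter.
    have sz : forall u, ~~ (m <= size u) -> size (pad u) == m.
      move=> u; rewrite -ltnNge => h; rewrite size_cat size_nseq subnK //.
      exact: ltnW.
    have ui : uniq (map pad (filter (fun u => ~~ (m <= size u)) s)).
      rewrite map_inj_in_uniq ?filter_uniq // => u v.
      rewrite !mem_filter => /andP [hu uin] /andP [hv vin] E.
      have key : forall u v, u \in s -> v \in s -> ~~ (m <= size u) -> ~~ (m <= size v) ->
          pad u = pad v -> size u <= size v -> u = v.
        move=> u' v' u's v's hu' hv' E' le; apply: scs => //.
        apply: (@suffix_cat_short _ (nseq (m - size v') a0)) => //.
        rewrite -/(pad v') -E'; exact: suffix_suffix.
      case: (leqP (size u) (size v)) => le; first exact: key.
      by apply/esym; apply: key => //; apply: ltnW.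
    rewrite -(size_map pad) cardE -(size_map (@tval m A)).
    apply: (uniq_leq_size ui) => y /mapP [u].
    rewrite mem_filter => /andP [hu _] ->.
    apply/mapP; exists (Tuple (sz u hu)) => //.
    by rewrite mem_enum.
  + rewrite decomp_m; apply: leq_sum => t _.
    case: (boolP (inLb X t)) => /inLbP tL.
      apply: (claimC dend us scs sL (k := (\sum_(v <- s) size v).+1)) => //.
        move=> u uin; rewrite addnS ltnS.
        exact: leq_trans (size_bound us uin) (leq_addl _ _).
      by rewrite size_tuple.
    by rewrite sum_none // => u uin suw; apply: tL; exact: inL_suffix suw (sL u uin).
- move=> s us smax sm; have [sc [sL _]] := smax.
  rewrite (bigID (fun u => m <= size u)) /= [X in _ + X]big1_seq ?addn0; last first.
    by move=> u /andP [h uin]; rewrite sm in h.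
  rewrite decomp_m (bigID (fun t : m.-tuple A => inLb X t)) /= [X in _ + X]big1 ?addn0;
    last first.
    move=> t /inLbP tn; apply: sum_none => u uin suw; apply: tn.
    exact: inL_suffix suw (sL u uin).
  apply: eq_bigr => t /inLbP tL.
  apply: (claimE dend us smax (k := (\sum_(v <- s) size v).+1)) => //.
  + move=> u uin; rewrite addnS ltnS.
    exact: leq_trans (size_bound us uin) (leq_addl _ _).
  + by rewrite size_tuple.
  + move=> u uin sut; have h1 := size_suffix sut; have h2 := sm u uin.
    rewrite size_tuple in h1.
    have e : size u = m by apply/eqP; rewrite eqn_leq h1 h2.
    by move: sut; rewrite suffixE size_tuple e subnn drop0 => /eqP.
Qed.
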